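(* Let $\Sigma_1 \subset \mathbb{R}^{N_1}$ and $\Sigma_2 \subset \mathbb{R}^{N_2}$ be nonempty, and let $\Sigma = \Sigma_1 \times \Sigma_2 \subset \mathbb{R}^{N_1}\times\mathbb{R}^{N_2}$, equipped with the norm $\|(x_1,x_2)\|_2 = \sqrt{\|x_1\|_2^2 + \|x_2\|_2^2}$. For $i = 1,2$ let $P_i$ be a generalized projection onto $\Sigma_i$ minimizing $\beta_{\Sigma_i}$ over all generalized projections onto $\Sigma_i$, with $\beta_{\Sigma_i}(P_i) < \infty$. Define $P_\Sigma(z_1, z_2) = (P_1(z_1), P_2(z_2))$ (i.e., the set $P_1(z_1)\times P_2(z_2)$). Then $P_\Sigma$ minimizes $\beta_\Sigma$ over all generalized projections onto $\Sigma$.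
   Context: A (set-valued) generalized projection onto $\Sigma \subset \mathbb{R}^N$ is a map $P$ assigning to each $z \in \mathbb{R}^N$ a nonempty subset $P(z) \subset \Sigma$. Restricted Lipschitz property: $P$ has the restricted $\beta$-Lipschitz property with respect to $\Sigma$ if for all $z \in \mathbb{R}^N$, all $x \in \Sigma$ and all $u \in P(z)$, $\|u - x\|_2 \le \beta\|z - x\|_2$; $\beta_\Sigma(P)$ denotes the smallest such $\beta$ (possibly $+\infty$). *)

(* Defs.v *)
From HB Require Import structures.
From mathcomp Require Import all_boot all_order all_algebra.
From mathcomp Require Import boolp classical_sets reals constructive_ereal ereal.
Set Implicit Arguments. Unset Strict Implicit. Unset Printing Implicit Defensive.
Import Order.TTheory GRing.Theory Num.Theory.
Local Open Scope ring_scope.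
Local Open Scope classical_set_scope.

Definition norm2 {R : realType} {N : nat} (v : 'rV[R]_N) : R :=
  Num.sqrt (\sum_(i < N) v ord0 i ^+ 2).

Definition gen_proj {R : realType} {N : nat}
  (Sigma : set 'rV[R]_N) (P : 'rV[R]_N -> set 'rV[R]_N) : Prop :=
  forall z, P z !=set0 /\ P z `<=` Sigma.

Definition restricted_lipschitz {R : realType} {N : nat}
  (Sigma : set 'rV[R]_N) (P : 'rV[R]_N -> set 'rV[R]_N) (beta : R) : Prop :=
  forall z x u, Sigma x -> P z u -> norm2 (u - x) <= beta * norm2 (z - x).

(* beta_Sigma(P): the smallest (nonnegative) such beta, +oo if none. *)
Definition beta_Sigma {R : realType} {N : nat}
  (Sigma : set 'rV[R]_N) (P : 'rV[R]_N -> set 'rV[R]_N) : \bar R :=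
  ereal_inf [set b%:E | b in [set b : R | 0 <= b /\ restricted_lipschitz Sigma P b]].

(* Cartesian product of sets, via concatenation R^N1 x R^N2 = R^(N1+N2);
   the Euclidean norm of row_mx x1 x2 is sqrt(|x1|^2 + |x2|^2). *)
Definition prod_set {R : realType} {N1 N2 : nat}
  (S1 : set 'rV[R]_N1) (S2 : set 'rV[R]_N2) : set 'rV[R]_(N1 + N2) :=
  [set row_mx x1 x2 | x1 in S1 & x2 in S2].

Definition prod_proj {R : realType} {N1 N2 : nat}
  (P1 : 'rV[R]_N1 -> set 'rV[R]_N1) (P2 : 'rV[R]_N2 -> set 'rV[R]_N2)
  (z : 'rV[R]_(N1 + N2)) : set 'rV[R]_(N1 + N2) :=
  prod_set (P1 (lsubmx z)) (P2 (rsubmx z)).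

(* Main.v *)
Require Import Defs.
From HB Require Import structures.
From mathcomp Require Import all_boot all_order all_algebra.
From mathcomp Require Import boolp classical_sets reals constructive_ereal ereal.
Import Order.TTheory GRing.Theory Num.Theory.
Local Open Scope ring_scope.
Local Open Scope classical_set_scope.

Section H.
Variable R : realType.

Definition sq {N} (v : 'rV[R]_N) := \sum_(i < N) v ord0 i ^+ 2.

Lemma sq_ge0 N (v : 'rV[R]_N) : 0 <= sq v.
Proof. by apply: sumr_ge0 => i _; exact: sqr_ge0. Qed.

Lemma sq_row N1 N2 (a : 'rV[R]_N1) (b : 'rV[R]_N2) : sq (row_mx a b) = sq a + sq b.
Proof. by rewrite /sq big_split_ord /=; congr (_ + _); apply: eq_bigr => i _;
  rewrite ?row_mxEl ?row_mxEr. Qed.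

Lemma lipE N M (v : 'rV[R]_N) (w : 'rV[R]_M) c : 0 <= c ->
  (norm2 v <= c * norm2 w) <-> (sq v <= c ^+ 2 * sq w).
Proof.
move=> c0; rewrite /norm2 -/(sq v) -/(sq w).
have -> : c * Num.sqrt (sq w) = Num.sqrt (c ^+ 2 * sq w).
  by rewrite sqrtrM ?sqr_ge0 // sqrtr_sqr ger0_norm.
by rewrite ler_sqrt // mulr_ge0 ?sqr_ge0 ?sq_ge0.
Qed.

End H.
Arguments lipE {R N M v w c}.
Section M.
Variable R : realType.

Lemma lip_mono N (S : set 'rV[R]_N) P b c : 0 <= b -> b <= c ->
  restricted_lipschitz S P b -> restricted_lipschitz S P c.
Proof.
move=> b0 bc H z x u Sx Pu; apply: (le_trans (H z x u Sx Pu)).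
by apply: ler_wpM2r => //; rewrite /norm2 sqrtr_ge0.
Qed.

Lemma beta_le N (S : set 'rV[R]_N) P b : 0 <= b ->
  restricted_lipschitz S P b -> (beta_Sigma S P <= b%:E)%E.
Proof. by move=> b0 H; apply: ge_ereal_inf; exists b%:E => //; exists b. Qed.

Lemma beta_lt N (S : set 'rV[R]_N) P c : (beta_Sigma S P < c%:E)%E ->
  0 <= c /\ restricted_lipschitz S P c.
Proof.
move=> /ereal_inf_lt [_ [b [b0 Hb] <-]]; rewrite lte_fin => bc.
have c0 : 0 <= c by apply: le_trans (ltW bc).
by split => //; apply: lip_mono b0 (ltW bc) Hb.
Qed.

Lemma prod_lip N1 N2 (S1 : set 'rV[R]_N1) (S2 : set 'rV[R]_N2) P1 P2 c :
  0 <= c -> restricted_lipschitz S1 P1 c -> restricted_lipschitz S2 P2 c ->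
  restricted_lipschitz (prod_set S1 S2) (prod_proj P1 P2) c.
Proof.
move=> c0 H1 H2 z _ _ [x1 Sx1 [x2 Sx2 <-]] [u1 Pu1 [u2 Pu2 <-]].
have := H1 _ _ _ Sx1 Pu1; have := H2 _ _ _ Sx2 Pu2.
move=> /(lipE c0) h2 /(lipE c0) h1; apply/lipE => //.
rewrite -(hsubmxK z) opp_row_mx !add_row_mx !sq_row mulrDr.
exact: lerD.
Qed.

Lemma proj_lip N1 N2 (S1 : set 'rV[R]_N1) (S2 : set 'rV[R]_N2) Q b x2 :
  0 <= b -> S2 x2 -> restricted_lipschitz (prod_set S1 S2) Q b ->
  restricted_lipschitz S1 (fun z1 => lsubmx @` Q (row_mx z1 x2)) b.
Proof.
move=> b0 Sx2 H z1 x1 u1 Sx1 [u Qu <-].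
have := H _ (row_mx x1 x2) _ _ Qu.
have Sx : prod_set S1 S2 (row_mx x1 x2) by exists x1 => //; exists x2.
move=> /(_ Sx) /(lipE b0) h; apply/lipE => //.
move: h; rewrite -{1}(hsubmxK u) opp_row_mx !add_row_mx !sq_row subrr.
have -> : @sq R N2 0 = 0 by rewrite /sq big1 // => i _; rewrite mxE expr0n.
rewrite addr0; apply: le_trans; rewrite lerDl; exact: sq_ge0.
Qed.

Lemma proj_lip2 N1 N2 (S1 : set 'rV[R]_N1) (S2 : set 'rV[R]_N2) Q b x1 :
  0 <= b -> S1 x1 -> restricted_lipschitz (prod_set S1 S2) Q b ->
  restricted_lipschitz S2 (fun z2 => rsubmx @` Q (row_mx x1 z2)) b.
Proof.
move=> b0 Sx1 H z2 x2 u2 Sx2 [u Qu <-].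
have := H _ (row_mx x1 x2) _ _ Qu.
have Sx : prod_set S1 S2 (row_mx x1 x2) by exists x1 => //; exists x2.
move=> /(_ Sx) /(lipE b0) h; apply/lipE => //.
move: h; rewrite -{1}(hsubmxK u) opp_row_mx !add_row_mx !sq_row subrr.
have -> : @sq R N1 0 = 0 by rewrite /sq big1 // => i _; rewrite mxE expr0n.
rewrite add0r; apply: le_trans; rewrite lerDr; exact: sq_ge0.
Qed.

End M.
Arguments beta_le {R N S P b}.
Arguments beta_lt {R N S P c}.
Arguments proj_lip {R N1 N2 S1 S2 Q b x2}.
Arguments proj_lip2 {R N1 N2 S1 S2 Q b x1}.

Theorem lemma2 (R : realType) (N1 N2 : nat)
  (Sigma1 : set 'rV[R]_N1) (Sigma2 : set 'rV[R]_N2)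
  (P1 : 'rV[R]_N1 -> set 'rV[R]_N1) (P2 : 'rV[R]_N2 -> set 'rV[R]_N2) :
  Sigma1 !=set0 -> Sigma2 !=set0 ->
  gen_proj Sigma1 P1 -> gen_proj Sigma2 P2 ->
  (forall Q1, gen_proj Sigma1 Q1 -> (beta_Sigma Sigma1 P1 <= beta_Sigma Sigma1 Q1)%E) ->
  (forall Q2, gen_proj Sigma2 Q2 -> (beta_Sigma Sigma2 P2 <= beta_Sigma Sigma2 Q2)%E) ->
  (beta_Sigma Sigma1 P1 < +oo)%E -> (beta_Sigma Sigma2 P2 < +oo)%E ->
  gen_proj (prod_set Sigma1 Sigma2) (prod_proj P1 P2) /\
  (forall Q, gen_proj (prod_set Sigma1 Sigma2) Q ->
     (beta_Sigma (prod_set Sigma1 Sigma2) (prod_proj P1 P2)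
        <= beta_Sigma (prod_set Sigma1 Sigma2) Q)%E).
Proof.
move=> [x1 Sx1] [x2 Sx2] g1 g2 H1 H2 _ _; split.
  move=> z; split.
    have [[u1 Pu1] _] := g1 (lsubmx z); have [[u2 Pu2] _] := g2 (rsubmx z).
    by exists (row_mx u1 u2); exists u1 => //; exists u2.
  move=> _ [u1 Pu1 [u2 Pu2 <-]]; exists u1; first exact: (g1 _).2 _ Pu1.
  by exists u2 => //; exact: (g2 _).2 _ Pu2.
move=> Q gQ; apply: le_ereal_inf_tmp => _ [b [b0 Hb] <-].
pose Q1 := fun z1 => lsubmx @` Q (row_mx z1 x2).
pose Q2 := fun z2 => rsubmx @` Q (row_mx x1 z2).
have gQ1 : gen_proj Sigma1 Q1.
  move=> z1; split.
    by have [[u Qu] _] := gQ (row_mx z1 x2); exists (lsubmx u); exists u.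
  move=> _ [u Qu <-]; have [_ /(_ _ Qu)] := gQ (row_mx z1 x2).
  by move=> [a Sa [a' _ <-]]; rewrite row_mxKl.
have gQ2 : gen_proj Sigma2 Q2.
  move=> z2; split.
    by have [[u Qu] _] := gQ (row_mx x1 z2); exists (rsubmx u); exists u.
  move=> _ [u Qu <-]; have [_ /(_ _ Qu)] := gQ (row_mx x1 z2).
  by move=> [a _ [a' Sa' <-]]; rewrite row_mxKr.
have hb1 := le_trans (H1 Q1 gQ1) (beta_le b0 (proj_lip b0 Sx2 Hb)).
have hb2 := le_trans (H2 Q2 gQ2) (beta_le b0 (proj_lip2 b0 Sx1 Hb)).
apply/lee_addgt0Pr => e e0.
have lt1 : (beta_Sigma Sigma1 P1 < (b + e)%:E)%E.
  by apply: le_lt_trans hb1 _; rewrite lte_fin ltrDl.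
have lt2 : (beta_Sigma Sigma2 P2 < (b + e)%:E)%E.
  by apply: le_lt_trans hb2 _; rewrite lte_fin ltrDl.
have [c0 L1] := beta_lt lt1; have [_ L2] := beta_lt lt2.
rewrite -EFinD.
apply: (beta_le c0); exact: prod_lip.
Qed.
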